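(* Let $2\le m<n$, let $g_1,\dots,g_m:\mathbb{R}^n\to\mathbb{R}$ be smooth maps and $c_1,\dots,c_m\in\mathbb{R}$; let $Y=\{p: g_i(p)=c_i,\ 1\le i\le m-1\}$ and $X=\{p\in Y: g_m(p)=c_m\}$. Assume $Y$ is nonempty, bounded and connected, $\nabla g_1(p),\dots,\nabla g_{m-1}(p)$ are linearly independent at every $p\in Y$, and $g_m|_Y$ is a Morse function on $Y$. If $c_m$ equals the global maximum or the global minimum of $g_m|_Y$, then the social choice problem over $X$ has a solution.
   Context: A smooth function on a manifold is a Morse function if its Hessian (in local coordinates) is nonsingular at each of its critical points. For $X\subseteq\mathbb{R}^n$ and $k\ge 2$, a social choice function for $k$ agents over $X$ is a continuous map $F:X^k\to X$ which is anonymous (invariant under permutations of the arguments) and unanimous ($F(p,\dots,p)=p$). ''The social choice problem over $X$ has a solution'' means that an SCF for $k$ agents over $X$ exists for every $k\ge 2$. *)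

(* Defs.v *)
(* classical reals. Points of R^n are functions nat -> R whose
   coordinates of index >= n vanish. *)
From Stdlib Require Import Reals Lra Lia Arith.
Open Scope R_scope.

Definition pt := nat -> R.

Definition InRn (n : nat) (x : pt) : Prop := forall i, (n <= i)%nat -> x i = 0.

Fixpoint sumR (n : nat) (f : nat -> R) : R :=
  match n with O => 0 | S k => sumR k f + f k end.

Definition distRn (n : nat) (x y : pt) : R := sqrt (sumR n (fun i => (x i - y i) ^ 2)).
Definition normR (n : nat) (x : pt) : R := sqrt (sumR n (fun i => (x i) ^ 2)).

Definition shift (x : pt) (i : nat) (t : R) : pt :=
  fun k => if Nat.eqb k i then x k + t else x k.

Definition IsPartialAt (f : pt -> R) (x : pt) (i : nat) (a : R) : Prop :=
  derivable_pt_lim (fun t => f (shift x i t)) 0 a.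

Definition IsGradAt (n : nat) (f : pt -> R) (x v : pt) : Prop :=
  forall i, (i < n)%nat -> IsPartialAt f x i (v i).

Definition open_in (n : nat) (D : pt -> Prop) : Prop :=
  forall x, D x -> InRn n x /\
    exists r, r > 0 /\ forall y, InRn n y -> distRn n x y < r -> D y.

Definition cont_on (n : nat) (D : pt -> Prop) (f : pt -> R) : Prop :=
  forall x, D x -> forall eps, eps > 0 -> exists delta, delta > 0 /\
    forall y, D y -> distRn n x y < delta -> Rabs (f y - f x) < eps.

Fixpoint Ck (n : nat) (D : pt -> Prop) (k : nat) (f : pt -> R) : Prop :=
  match k with
  | O => cont_on n D f
  | S k' => cont_on n D f /\
      forall i, (i < n)%nat -> exists g : pt -> R,
        (forall x, D x -> IsPartialAt f x i (g x)) /\ Ck n D k' g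
  end.

Definition smooth_on (n : nat) (D : pt -> Prop) (f : pt -> R) : Prop :=
  forall k, Ck n D k f.

Definition rel_open (n : nat) (S U : pt -> Prop) : Prop :=
  (forall p, U p -> S p) /\
  forall p, U p -> exists r, r > 0 /\ forall q, S q -> distRn n p q < r -> U q.

Definition connected_set (n : nat) (S : pt -> Prop) : Prop :=
  forall U V, rel_open n S U -> rel_open n S V ->
    (forall p, S p -> U p \/ V p) -> (forall p, U p -> V p -> False) ->
    (forall p, ~ U p) \/ (forall p, ~ V p).

Definition bounded_set (n : nat) (S : pt -> Prop) : Prop :=
  exists M, forall p, S p -> normR n p <= M.

(* phi : U (open in R^d) -> S (subset of R^n) is a local parametrization
   (inverse of a chart / local coordinates) of S: smooth, injective, an immersion,
   a homeomorphism onto a relatively open subset of S. *)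
Definition is_chart (n d : nat) (S : pt -> Prop) (U : pt -> Prop) (phi : pt -> pt) : Prop :=
  open_in d U /\
  (forall j, (j < n)%nat -> smooth_on d U (fun u => phi u j)) /\
  (forall u, U u -> S (phi u)) /\
  (forall u v, U u -> U v -> phi u = phi v -> u = v) /\
  rel_open n S (fun q => exists u, U u /\ phi u = q) /\
  (forall u, U u -> forall eps, eps > 0 -> exists delta, delta > 0 /\
     forall v, U v -> distRn n (phi u) (phi v) < delta -> distRn d u v < eps) /\
  (forall u, U u -> forall J : nat -> nat -> R,
     (forall j i, (j < n)%nat -> (i < d)%nat ->
        IsPartialAt (fun w => phi w j) u i (J j i)) ->
     forall w, InRn d w ->
       (forall j, (j < n)%nat -> sumR d (fun i => J j i * w i) = 0) ->
       forall i, (i < d)%nat -> w i = 0).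

Definition critical_pt (d : nat) (h : pt -> R) (u0 : pt) : Prop :=
  forall i, (i < d)%nat -> IsPartialAt h u0 i 0.

Definition IsHessAt (d : nat) (U : pt -> Prop) (h : pt -> R) (u0 : pt)
    (H : nat -> nat -> R) : Prop :=
  exists G : nat -> pt -> R,
    (forall i u, (i < d)%nat -> U u -> IsPartialAt h u i (G i u)) /\
    (forall i j, (i < d)%nat -> (j < d)%nat -> IsPartialAt (G i) u0 j (H i j)).

Definition nonsingular_mx (d : nat) (H : nat -> nat -> R) : Prop :=
  forall w, InRn d w ->
    (forall i, (i < d)%nat -> sumR d (fun j => H i j * w j) = 0) ->
    forall i, (i < d)%nat -> w i = 0.

Definition Morse_on (n d : nat) (S : pt -> Prop) (f : pt -> R) : Prop :=
  forall p, S p ->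
    (exists U phi u0, is_chart n d S U phi /\ U u0 /\ phi u0 = p) /\
    (forall U phi u0, is_chart n d S U phi -> U u0 -> phi u0 = p ->
       critical_pt d (fun u => f (phi u)) u0 ->
       forall H, IsHessAt d U (fun u => f (phi u)) u0 H -> nonsingular_mx d H).

(* g_1..g_m are g 0 .. g (m-1); c_1..c_m are c 0 .. c (m-1) *)
Definition Yset (n m : nat) (g : nat -> pt -> R) (c : nat -> R) (p : pt) : Prop :=
  InRn n p /\ forall i, (i < m - 1)%nat -> g i p = c i.

Definition Xset (n m : nat) (g : nat -> pt -> R) (c : nat -> R) (p : pt) : Prop :=
  Yset n m g c p /\ g (m - 1)%nat p = c (m - 1)%nat.

Definition grads_indep (n m : nat) (g : nat -> pt -> R) (p : pt) : Prop :=
  forall v : nat -> pt, (forall i, (i < m - 1)%nat -> IsGradAt n (g i) p (v i)) ->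
  forall a : nat -> R,
    (forall j, (j < n)%nat -> sumR (m - 1) (fun i => a i * v i j) = 0) ->
    forall i, (i < m - 1)%nat -> a i = 0.

Definition is_global_max (S : pt -> Prop) (f : pt -> R) (c : R) : Prop :=
  (exists p, S p /\ f p = c) /\ forall q, S q -> f q <= c.

Definition is_global_min (S : pt -> Prop) (f : pt -> R) (c : R) : Prop :=
  (exists p, S p /\ f p = c) /\ forall q, S q -> c <= f q.

Definition in_power (X : pt -> Prop) (k : nat) (xs : nat -> pt) : Prop :=
  forall i, (i < k)%nat -> X (xs i).

Definition is_perm (k : nat) (sigma : nat -> nat) : Prop :=
  (forall i, (i < k)%nat -> (sigma i < k)%nat) /\
  (forall i j, (i < k)%nat -> (j < k)%nat -> sigma i = sigma j -> i = j).

Definition is_SCF (n : nat) (X : pt -> Prop) (k : nat) (F : (nat -> pt) -> pt) : Prop :=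
  (forall xs ys, (forall i, (i < k)%nat -> xs i = ys i) -> F xs = F ys) /\
  (forall xs, in_power X k xs -> X (F xs)) /\
  (forall xs, in_power X k xs -> forall eps, eps > 0 -> exists delta, delta > 0 /\
     forall ys, in_power X k ys -> (forall i, (i < k)%nat -> distRn n (xs i) (ys i) < delta) ->
       distRn n (F xs) (F ys) < eps) /\
  (forall xs sigma, in_power X k xs -> is_perm k sigma ->
     F (fun i => xs (sigma i)) = F xs) /\
  (forall p, X p -> F (fun _ => p) = p).

Definition social_choice_solvable (n : nat) (X : pt -> Prop) : Prop :=
  forall k, (2 <= k)%nat -> exists F, is_SCF n X k F.

(* Main.v *)
Require Import Defs.
From Stdlib Require Import Reals Lra Lia Arith FunctionalExtensionality ClassicalEpsilon FinFun.
Open Scope R_scope.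

Lemma sumR_ext N f g : (forall k, (k < N)%nat -> f k = g k) -> sumR N f = sumR N g.
Proof. induction N; simpl; intros H; [reflexivity|]. rewrite IHN by (intros; apply H; lia). rewrite H by lia. reflexivity. Qed.

Lemma sumR_plus N f g : sumR N (fun k => f k + g k) = sumR N f + sumR N g.
Proof. induction N; simpl; [lra|]. rewrite IHN. lra. Qed.

Lemma sumR_scal N c f : sumR N (fun k => c * f k) = c * sumR N f.
Proof. induction N; simpl; [lra|]. rewrite IHN. lra. Qed.

Lemma sumR_minus N f g : sumR N (fun k => f k - g k) = sumR N f - sumR N g.
Proof. induction N; simpl; [lra|]. rewrite IHN. lra. Qed.

Lemma sumR_nonneg N f : (forall k, (k < N)%nat -> 0 <= f k) -> 0 <= sumR N f.
Proof. induction N; simpl; intros H; [lra|]. assert (0 <= f N) by (apply H; lia).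
 assert (0 <= sumR N f) by (apply IHN; intros; apply H; lia). lra. Qed.

Lemma sumR_le N f g : (forall k, (k < N)%nat -> f k <= g k) -> sumR N f <= sumR N g.
Proof. induction N; simpl; intros H; [lra|]. assert (f N <= g N) by (apply H; lia).
 assert (sumR N f <= sumR N g) by (apply IHN; intros; apply H; lia). lra. Qed.

Lemma sumR_abs N f : Rabs (sumR N f) <= sumR N (fun k => Rabs (f k)).
Proof. induction N; simpl. rewrite Rabs_R0; lra.
 eapply Rle_trans; [apply Rabs_triang|]. lra. Qed.

Lemma sumR_term N f k : (forall k, (k < N)%nat -> 0 <= f k) -> (k < N)%nat -> f k <= sumR N f.
Proof. induction N; simpl; intros H Hk; [lia|].
 assert (0 <= sumR N f) by (apply sumR_nonneg; intros; apply H; lia).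
 destruct (Nat.eq_dec k N). subst. lra.
 assert (f k <= sumR N f) by (apply IHN; [intros; apply H; lia| lia]).
 assert (0 <= f N) by (apply H; lia). lra. Qed.

Lemma sumR_zero N f : (forall k, (k < N)%nat -> 0 <= f k) -> sumR N f <= 0 ->
  forall k, (k < N)%nat -> f k = 0.
Proof. intros H Hs k Hk. assert (f k <= sumR N f) by (apply sumR_term; auto).
 assert (0 <= f k) by auto. lra. Qed.

Lemma sumR_bound N f e : (forall k, (k < N)%nat -> f k <= e) -> sumR N f <= INR N * e.
Proof. induction N; cbn [sumR]; intros H; [simpl; lra|]. assert (f N <= e) by (apply H; lia).
 assert (sumR N f <= INR N * e) by (apply IHN; intros; apply H; lia).
 rewrite S_INR. lra. Qed.

Lemma sumR_const0 N : sumR N (fun _ => 0) = 0.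
Proof. induction N; simpl; [lra|]. rewrite IHN; lra. Qed.

Lemma sumR_sq_nonneg N (a : nat -> R) : 0 <= sumR N (fun k => (a k)^2).
Proof. apply sumR_nonneg; intros; apply pow2_ge_0. Qed.

Lemma dist_self N x : distRn N x x = 0.
Proof. unfold distRn. rewrite (sumR_ext _ _ (fun _ => 0)). rewrite sumR_const0. apply sqrt_0.
 intros; simpl; ring. Qed.

Lemma dist_sym N x y : distRn N x y = distRn N y x.
Proof. unfold distRn. f_equal. apply sumR_ext. intros; simpl; ring. Qed.

Lemma dist_nonneg N x y : 0 <= distRn N x y.
Proof. apply sqrt_pos. Qed.



Lemma sqrt_sum_le_abs N (a : nat -> R) : sqrt (sumR N (fun k => (a k)^2)) <= sumR N (fun k => Rabs (a k)).
Proof. induction N; cbn [sumR]. rewrite sqrt_0; lra.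
 assert (HT: 0 <= sumR N (fun k => Rabs (a k))) by (apply sumR_nonneg; intros; apply Rabs_pos).
 assert (HS := sumR_sq_nonneg N a).
 set (S := sumR N (fun k => (a k)^2)) in *. set (T := sumR N (fun k => Rabs (a k))) in *.
 assert (Hs : S <= T^2).
 { assert (sqrt S * sqrt S = S) by (apply sqrt_sqrt; auto).
   assert (0 <= sqrt S) by apply sqrt_pos. nra. }
 rewrite <- (sqrt_pow2 (T + Rabs (a N))).
 2: { assert (0 <= Rabs (a N)) by apply Rabs_pos. lra. }
 apply sqrt_le_1_alt.
 assert (Ha : (a N)^2 = (Rabs (a N))^2) by (rewrite <- Rsqr_pow2, <- Rsqr_pow2; apply Rsqr_abs).
 assert (0 <= Rabs (a N)) by apply Rabs_pos.
 assert (0 <= T * Rabs (a N)) by (apply Rmult_le_pos; auto).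
 rewrite Ha. simpl. simpl in Hs. nra.
Qed.

Lemma dist_le_sum N x y : distRn N x y <= sumR N (fun k => Rabs (x k - y k)).
Proof. apply (sqrt_sum_le_abs N (fun k => x k - y k)). Qed.

Lemma coord_le_dist N x y k : (k < N)%nat -> Rabs (x k - y k) <= distRn N x y.
Proof. intros Hk. unfold distRn.
 rewrite <- sqrt_Rsqr_abs. apply sqrt_le_1_alt. rewrite Rsqr_pow2.
 apply (sumR_term N (fun k => (x k - y k)^2)); auto. intros; apply pow2_ge_0. Qed.

Lemma dist_mono N x y z : (forall k, (k < N)%nat -> Rabs (z k - x k) <= Rabs (y k - x k)) ->
  distRn N x z <= distRn N x y.
Proof. intros H. unfold distRn. apply sqrt_le_1_alt. apply sumR_le. intros k Hk.
 specialize (H k Hk). rewrite Rabs_minus_sym in H. rewrite (Rabs_minus_sym (y k)) in H.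
 rewrite <- !Rsqr_pow2. rewrite (Rsqr_abs (x k - z k)), (Rsqr_abs (x k - y k)).
 apply Rsqr_incr_1; auto; apply Rabs_pos. Qed.

Lemma shift0 x i : shift x i 0 = x.
Proof. apply functional_extensionality; intro k; unfold shift. destruct (Nat.eqb k i); lra. Qed.

Lemma shift_shift x i c t : shift (shift x i c) i t = shift x i (c + t).
Proof. apply functional_extensionality; intro k; unfold shift. destruct (Nat.eqb k i); lra. Qed.

Lemma shift_InRn N x i t : InRn N x -> (i < N)%nat -> InRn N (shift x i t).
Proof. intros H Hi k Hk. unfold shift. destruct (Nat.eqb_spec k i). lia. auto. Qed.

Lemma dist_shift N x i t : (i < N)%nat -> distRn N x (shift x i t) = Rabs t.
Proof. intros Hi. unfold distRn.
 rewrite (sumR_ext _ _ (fun k => if Nat.eqb k i then t^2 else 0)).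
 2:{ intros k _. unfold shift. destruct (Nat.eqb k i); ring. }
 assert (forall M, sumR M (fun k => if Nat.eqb k i then t^2 else 0) = if Nat.ltb i M then t^2 else 0).
 { induction M; cbn [sumR]. reflexivity. rewrite IHM.
   destruct (Nat.ltb_spec i M), (Nat.eqb_spec M i), (Nat.ltb_spec i (S M)); try lia; subst; ring. }
 rewrite H. destruct (Nat.ltb_spec i N); try lia.
 rewrite <- Rsqr_pow2. apply sqrt_Rsqr_abs. Qed.

Lemma dpl_ext F G x l : (forall t, F t = G t) -> derivable_pt_lim F x l -> derivable_pt_lim G x l.
Proof. intros H. replace G with F; auto. apply functional_extensionality; auto. Qed.

Lemma dpl_eqv F x l l' : derivable_pt_lim F x l -> l = l' -> derivable_pt_lim F x l'.
Proof. intros H ->; auto. Qed.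

Lemma dpl_shift F c L : derivable_pt_lim (fun s => F (c + s)) 0 L -> derivable_pt_lim F c L.
Proof. intros H eps Heps. destruct (H eps Heps) as [del Hd]. exists del. intros h Hh Hlt.
 specialize (Hd h Hh Hlt). rewrite Rplus_0_l, Rplus_0_r in Hd. exact Hd. Qed.

Lemma partial_line f z j c L : IsPartialAt f (shift z j c) j L ->
  derivable_pt_lim (fun s => f (shift z j s)) c L.
Proof. intros H. apply dpl_shift. unfold IsPartialAt in H.
 eapply dpl_ext; [|exact H]. intros t; simpl. rewrite shift_shift. reflexivity. Qed.

Lemma dpl_mult F G x l1 l2 : derivable_pt_lim F x l1 -> derivable_pt_lim G x l2 ->
  derivable_pt_lim (fun t => F t * G t) x (l1 * G x + F x * l2).
Proof. intros. apply derivable_pt_lim_mult; auto. Qed.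

Lemma dpl_plus F G x l1 l2 : derivable_pt_lim F x l1 -> derivable_pt_lim G x l2 ->
  derivable_pt_lim (fun t => F t + G t) x (l1 + l2).
Proof. intros. apply derivable_pt_lim_plus; auto. Qed.

Lemma dpl_const a x : derivable_pt_lim (fun _ => a) x 0.
Proof. apply derivable_pt_lim_const. Qed.

Lemma dpl_sumR N (F : nat -> R -> R) x L : (forall k, (k < N)%nat -> derivable_pt_lim (F k) x (L k)) ->
  derivable_pt_lim (fun t => sumR N (fun k => F k t)) x (sumR N L).
Proof. induction N; intros H; cbn [sumR]. apply dpl_const.
 apply dpl_plus. apply IHN; intros; apply H; lia. apply H; lia. Qed.

Lemma MVT_gen f f' a b : (forall c, Rmin a b <= c <= Rmax a b -> derivable_pt_lim f c (f' c)) ->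
  exists c, Rmin a b <= c <= Rmax a b /\ f b - f a = f' c * (b - a).
Proof. intros H. destruct (Rtotal_order a b) as [Hab|[Hab|Hab]].
 - destruct (MVT_cor2 f f' a b Hab) as [c [Hc1 Hc2]].
   { intros c Hc. apply H. rewrite Rmin_left, Rmax_right by lra. lra. }
   exists c. rewrite Rmin_left, Rmax_right by lra. split; [lra|auto].
 - subst. exists b. rewrite Rmin_left, Rmax_left by lra. split; [lra|ring].
 - destruct (MVT_cor2 f f' b a Hab) as [c [Hc1 Hc2]].
   { intros c Hc. apply H. rewrite Rmin_right, Rmax_left by lra. lra. }
   exists c. rewrite Rmin_right, Rmax_left by lra. split; [lra|]. lra.
Qed.

Lemma fermat_max F L r : derivable_pt_lim F 0 L -> r > 0 ->
  (forall t, Rabs t < r -> F t <= F 0) -> L = 0.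
Proof. intros HD Hr Hm.
 destruct (Rtotal_order L 0) as [HL|[HL|HL]]; auto; exfalso.
 - destruct (HD (-L) ltac:(lra)) as [del Hd].
   set (h := - Rmin (del/2) (r/2)).
   assert (Hp : 0 < Rmin (del/2) (r/2)) by (apply Rmin_pos; destruct del; simpl; lra).
   assert (Hm1 : Rmin (del/2) (r/2) <= del/2) by apply Rmin_l.
   assert (Hm2 : Rmin (del/2) (r/2) <= r/2) by apply Rmin_r.
   assert (Hah : Rabs h = Rmin (del/2) (r/2)) by (unfold h; rewrite Rabs_Ropp; apply Rabs_right; lra).
   assert (del > 0) by (destruct del; simpl; lra).
   specialize (Hd h ltac:(unfold h; lra) ltac:(rewrite Hah; lra)).
   specialize (Hm h ltac:(rewrite Hah; lra)). rewrite Rplus_0_l in Hd.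
   assert (Hq : 0 <= (F h - F 0) / h).
   { unfold Rdiv. replace ((F h - F 0) * / h) with ((F 0 - F h) * / (-h)) by (field; unfold h; lra).
     apply Rmult_le_pos; [lra|]. left; apply Rinv_0_lt_compat; unfold h; lra. }
   apply Rabs_def2 in Hd. lra.
 - destruct (HD L ltac:(lra)) as [del Hd].
   set (h := Rmin (del/2) (r/2)).
   assert (Hp : 0 < h) by (apply Rmin_pos; destruct del; simpl; lra).
   assert (Hm1 : h <= del/2) by apply Rmin_l.
   assert (Hm2 : h <= r/2) by apply Rmin_r.
   assert (Hah : Rabs h = h) by (apply Rabs_right; lra).
   assert (del > 0) by (destruct del; simpl; lra).
   specialize (Hd h ltac:(lra) ltac:(rewrite Hah; lra)).
   specialize (Hm h ltac:(rewrite Hah; lra)). rewrite Rplus_0_l in Hd.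
   assert (Hq : (F h - F 0) / h <= 0).
   { unfold Rdiv. replace ((F h - F 0) * / h) with (- ((F 0 - F h) * / h)) by ring.
     assert (0 <= (F 0 - F h) * / h). apply Rmult_le_pos; [lra|]. left; apply Rinv_0_lt_compat; lra. lra. }
   apply Rabs_def2 in Hd. lra.
Qed.

Lemma fermat_min F L r : derivable_pt_lim F 0 L -> r > 0 ->
  (forall t, Rabs t < r -> F 0 <= F t) -> L = 0.
Proof. intros HD Hr Hm.
 assert (- L = 0). apply (fermat_max (fun t => - F t) (-L) r); auto.
 apply (derivable_pt_lim_opp F 0 L HD). intros t Ht; specialize (Hm t Ht); lra. lra. Qed.

Lemma fin_min {A : Type} N (mu : nat -> A -> R) (Q : nat -> A -> Prop) :
  (forall k, (k < N)%nat -> exists d, d > 0 /\ forall a, mu k a < d -> Q k a) ->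
  exists d, d > 0 /\ forall k, (k < N)%nat -> forall a, mu k a < d -> Q k a.
Proof. induction N; intros H.
 - exists 1. split; [lra|]. intros; lia.
 - destruct IHN as [d1 [Hd1 H1]]. intros; apply H; lia.
   destruct (H N ltac:(lia)) as [d2 [Hd2 H2]].
   exists (Rmin d1 d2). split. apply Rmin_pos; auto.
   intros k Hk a Ha. assert (Rmin d1 d2 <= d1) by apply Rmin_l. assert (Rmin d1 d2 <= d2) by apply Rmin_r.
   destruct (Nat.eq_dec k N). subst. apply H2. lra. apply H1. lia. lra.
Qed.

Definition contat (N : nat) (D : pt -> Prop) (F : pt -> R) (x : pt) : Prop :=
  forall eps, eps > 0 -> exists delta, delta > 0 /\
    forall y, D y -> distRn N x y < delta -> Rabs (F y - F x) < eps.

Lemma cont_on_contat N D F x : cont_on N D F -> D x -> contat N D F x.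
Proof. intros H Hx. exact (H x Hx). Qed.

Lemma contat_const N D a x : contat N D (fun _ => a) x.
Proof. intros eps He. exists 1. split; [lra|]. intros. rewrite Rminus_diag, Rabs_R0. lra. Qed.

Lemma contat_plus N D F G x : contat N D F x -> contat N D G x -> contat N D (fun y => F y + G y) x.
Proof. intros HF HG eps He. destruct (HF (eps/2) ltac:(lra)) as [d1 [Hd1 H1]].
 destruct (HG (eps/2) ltac:(lra)) as [d2 [Hd2 H2]].
 exists (Rmin d1 d2). split. apply Rmin_pos; auto. intros y Dy Hy.
 assert (Rmin d1 d2 <= d1) by apply Rmin_l. assert (Rmin d1 d2 <= d2) by apply Rmin_r.
 specialize (H1 y Dy ltac:(lra)). specialize (H2 y Dy ltac:(lra)).
 replace (F y + G y - (F x + G x)) with ((F y - F x) + (G y - G x)) by ring.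
 eapply Rle_lt_trans; [apply Rabs_triang|]. lra. Qed.

Lemma contat_mult N D F G x : contat N D F x -> contat N D G x -> contat N D (fun y => F y * G y) x.
Proof. intros HF HG eps He.
 pose proof (Rabs_pos (F x)) as Ha. pose proof (Rabs_pos (G x)) as Hb.
 destruct (HF (eps / (3 * (Rabs (G x) + 1))) ltac:(apply Rdiv_lt_0_compat; lra)) as [d1 [Hd1 H1]].
 destruct (HG (Rmin 1 (eps / (3 * (Rabs (F x) + 1)))) ltac:(apply Rmin_pos; [lra| apply Rdiv_lt_0_compat; lra])) as [d2 [Hd2 H2]].
 exists (Rmin d1 d2). split. apply Rmin_pos; auto. intros y Dy Hy.
 assert (Rmin d1 d2 <= d1) by apply Rmin_l. assert (Rmin d1 d2 <= d2) by apply Rmin_r.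
 specialize (H1 y Dy ltac:(lra)). specialize (H2 y Dy ltac:(lra)).
 assert (Rmin 1 (eps / (3 * (Rabs (F x) + 1))) <= 1) by apply Rmin_l.
 assert (Rmin 1 (eps / (3 * (Rabs (F x) + 1))) <= eps / (3 * (Rabs (F x) + 1))) by apply Rmin_r.
 replace (F y * G y - F x * G x) with ((F y - F x) * G y + F x * (G y - G x)) by ring.
 eapply Rle_lt_trans; [apply Rabs_triang|]. rewrite !Rabs_mult.
 assert (HGy : Rabs (G y) <= Rabs (G x) + 1).
 { replace (G y) with (G x + (G y - G x)) by ring. eapply Rle_trans; [apply Rabs_triang|]. lra. }
 assert (E1 : Rabs (F y - F x) * Rabs (G y) <= eps / (3 * (Rabs (G x) + 1)) * (Rabs (G x) + 1)).
 { apply Rmult_le_compat; try apply Rabs_pos; lra. }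
 assert (E2 : Rabs (F x) * Rabs (G y - G x) <= (Rabs (F x) + 1) * (eps / (3 * (Rabs (F x) + 1)))).
 { apply Rmult_le_compat; try apply Rabs_pos; lra. }
 assert (E1' : eps / (3 * (Rabs (G x) + 1)) * (Rabs (G x) + 1) = eps / 3) by (field; lra).
 assert (E2' : (Rabs (F x) + 1) * (eps / (3 * (Rabs (F x) + 1))) = eps / 3) by (field; lra).
 lra.
Qed.

Lemma contat_sumR N M D (F : nat -> pt -> R) x : (forall k, (k < M)%nat -> contat N D (F k) x) ->
  contat N D (fun y => sumR M (fun k => F k y)) x.
Proof. induction M; intros H; cbn [sumR]. apply contat_const.
 apply contat_plus. apply IHM; intros; apply H; lia. apply H; lia. Qed.

Lemma contat_vec d n (U : pt -> Prop) (phi : pt -> pt) u0 :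
  (forall k, (k < n)%nat -> contat d U (fun u => phi u k) u0) ->
  forall e, e > 0 -> exists delta, delta > 0 /\ forall y, U y -> distRn d u0 y < delta ->
    distRn n (phi u0) (phi y) < e.
Proof. intros H e He.
 assert (Hn : 0 <= INR n) by apply pos_INR.
 set (e' := e / (INR n + 1)).
 assert (He' : e' > 0) by (unfold e'; apply Rdiv_lt_0_compat; lra).
 destruct (fin_min n (fun _ y => distRn d u0 y) (fun k y => U y -> Rabs (phi y k - phi u0 k) < e'))
   as [del [Hdel Hall]].
 { intros k Hk. destruct (H k Hk e' He') as [d1 [Hd1 H1]]. exists d1. split; auto. }
 exists del. split; auto. intros y Uy Hy.
 eapply Rle_lt_trans; [apply dist_le_sum|].
 assert (HB : sumR n (fun k => Rabs (phi u0 k - phi y k)) <= INR n * e').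
 { apply sumR_bound. intros k Hk. rewrite Rabs_minus_sym. left. apply Hall; auto. }
 assert (INR n * e' < e).
 { unfold e'. apply Rmult_lt_reg_r with (INR n + 1). lra.
   replace (INR n * (e / (INR n + 1)) * (INR n + 1)) with (INR n * e) by (field; lra). nra. }
 lra.
Qed.

Lemma contat_comp d n (U : pt -> Prop) (phi : pt -> pt) F u0 :
  (forall y, U y -> InRn n (phi y)) ->
  (forall e, e > 0 -> exists delta, delta > 0 /\ forall y, U y -> distRn d u0 y < delta ->
    distRn n (phi u0) (phi y) < e) ->
  contat n (InRn n) F (phi u0) -> contat d U (fun u => F (phi u)) u0.
Proof. intros Hin Hv HF eps He. destruct (HF eps He) as [d1 [Hd1 H1]].
 destruct (Hv d1 Hd1) as [d2 [Hd2 H2]]. exists d2. split; [auto|].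
 intros y Uy Hy. apply H1; auto. Qed.

Lemma between_abs s b : Rmin 0 b <= s <= Rmax 0 b -> Rabs s <= Rabs b.
Proof. intros H. unfold Rmin, Rmax in H. destruct (Rle_dec 0 b).
 rewrite !Rabs_right; lra. rewrite !Rabs_left1; lra. Qed.

Definition stair (x y : pt) (j : nat) : pt := fun l => if Nat.ltb l j then y l else x l.

Lemma stair0 x y : stair x y 0 = x.
Proof. apply functional_extensionality; intro l; unfold stair. destruct (Nat.ltb_spec l 0); [lia|auto]. Qed.

Lemma stairN N x y : InRn N x -> InRn N y -> stair x y N = y.
Proof. intros Hx Hy. apply functional_extensionality; intro l; unfold stair.
 destruct (Nat.ltb_spec l N); auto. rewrite Hx, Hy; auto. Qed.

Lemma stairS x y j : stair x y (S j) = shift (stair x y j) j (y j - x j).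
Proof. apply functional_extensionality; intro l; unfold stair, shift.
 destruct (Nat.eqb_spec l j). subst. destruct (Nat.ltb_spec j (S j)), (Nat.ltb_spec j j); try lia. ring.
 destruct (Nat.ltb_spec l (S j)), (Nat.ltb_spec l j); try lia; auto. Qed.

Lemma fdiff N (D : pt -> Prop) f (Df : nat -> pt -> R) x :
  InRn N x -> (exists r, r > 0 /\ forall y, InRn N y -> distRn N x y < r -> D y) ->
  (forall y k, D y -> (k < N)%nat -> IsPartialAt f y k (Df k y)) ->
  (forall k, (k < N)%nat -> contat N D (Df k) x) ->
  forall eps, eps > 0 -> exists delta, delta > 0 /\ forall y, InRn N y -> distRn N x y < delta ->
    Rabs (f y - f x - sumR N (fun k => Df k x * (y k - x k))) <= eps * sumR N (fun k => Rabs (y k - x k)).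
Proof. intros Hx [r [Hr HD]] Hp Hc eps He.
 destruct (fin_min N (fun _ y => distRn N x y) (fun k y => D y -> Rabs (Df k y - Df k x) < eps))
   as [d1 [Hd1 Hall]].
 { intros k Hk. destruct (Hc k Hk eps He) as [d2 [Hd2 H2]]. exists d2. split; auto. }
 exists (Rmin r d1). split. apply Rmin_pos; auto.
 intros y Hy Hxy. assert (Rmin r d1 <= r) by apply Rmin_l. assert (Rmin r d1 <= d1) by apply Rmin_r.
 assert (Good : forall p, InRn N p -> (forall l, (l < N)%nat -> Rabs (p l - x l) <= Rabs (y l - x l)) ->
          D p /\ forall k, (k < N)%nat -> Rabs (Df k p - Df k x) < eps).
 { intros p Hp0 Hdom. assert (distRn N x p <= distRn N x y) by (apply dist_mono; auto).
   assert (D p) by (apply HD; auto; lra). split; auto. intros k Hk. apply Hall; auto. lra. }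
 assert (Hst : forall j, InRn N (stair x y j) /\ forall l, (l < N)%nat -> Rabs (stair x y j l - x l) <= Rabs (y l - x l)).
 { intros j. split. intros l Hl. unfold stair. destruct (Nat.ltb l j); auto.
   intros l Hl. unfold stair. destruct (Nat.ltb l j). lra. rewrite Rminus_diag, Rabs_R0. apply Rabs_pos. }
 assert (Claim : forall j, (j <= N)%nat ->
   Rabs (f (stair x y j) - f x - sumR j (fun k => Df k x * (y k - x k))) <= eps * sumR j (fun k => Rabs (y k - x k))).
 { induction j; intros Hj.
   - cbn [sumR]. rewrite stair0. replace (f x - f x - 0) with 0 by ring. rewrite Rabs_R0; lra.
   - cbn [sumR]. specialize (IHj ltac:(lia)).
     set (z := stair x y j).
     assert (Hzj : z j = x j) by (unfold z, stair; destruct (Nat.ltb_spec j j); [lia|auto]).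
     assert (Hpts : forall s, Rmin 0 (y j - x j) <= s <= Rmax 0 (y j - x j) ->
        D (shift z j s) /\ forall k, (k < N)%nat -> Rabs (Df k (shift z j s) - Df k x) < eps).
     { intros s Hs. apply Good. apply shift_InRn; [apply Hst| lia].
       intros l Hl. unfold shift. destruct (Nat.eqb_spec l j).
       subst. rewrite Hzj. replace (x j + s - x j) with s by ring. apply between_abs; auto.
       apply Hst; auto. }
     destruct (MVT_gen (fun s => f (shift z j s)) (fun s => Df j (shift z j s)) 0 (y j - x j))
       as [c [Hcc Heq]].
     { intros c Hc0. apply partial_line. apply Hp; [apply Hpts; auto| lia]. }
     rewrite shift0 in Heq. fold z. rewrite stairS. fold z.
     destruct (Hpts c Hcc) as [_ Hc2]. specialize (Hc2 j ltac:(lia)).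
     replace (f (shift z j (y j - x j)) - f x - (sumR j (fun k => Df k x * (y k - x k)) + Df j x * (y j - x j)))
       with ((f z - f x - sumR j (fun k => Df k x * (y k - x k))) + (Df j (shift z j c) - Df j x) * (y j - x j))
       by (rewrite <- Rminus_0_r with (r := y j - x j) at 3; lra).
     eapply Rle_trans; [apply Rabs_triang|]. rewrite Rabs_mult.
     assert (Rabs (Df j (shift z j c) - Df j x) * Rabs (y j - x j) <= eps * Rabs (y j - x j)).
     { apply Rmult_le_compat_r. apply Rabs_pos. lra. }
     fold z in IHj. rewrite Rmult_plus_distr_l. lra. }
 specialize (Claim N (le_n N)). rewrite stairN in Claim; auto.
Qed.

Lemma chain N f (Df : nat -> pt -> R) (gam : R -> pt) x0 (a : nat -> R) :
  (forall y k, InRn N y -> (k < N)%nat -> IsPartialAt f y k (Df k y)) ->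
  (forall k, (k < N)%nat -> contat N (InRn N) (Df k) x0) ->
  InRn N x0 -> gam 0 = x0 ->
  (exists r, r > 0 /\ forall t, Rabs t < r -> InRn N (gam t)) ->
  (forall k, (k < N)%nat -> derivable_pt_lim (fun t => gam t k) 0 (a k)) ->
  derivable_pt_lim (fun t => f (gam t)) 0 (sumR N (fun k => Df k x0 * a k)).
Proof. intros Hp Hc Hx0 Hg0 [r [Hr Hin]] Ha.
 set (L := fun t => sumR N (fun k => Df k x0 * gam t k)).
 set (Rm := fun t => f (gam t) - L t).
 assert (dL : derivable_pt_lim L 0 (sumR N (fun k => Df k x0 * a k))).
 { unfold L. apply dpl_sumR. intros k Hk. eapply dpl_eqv.
   apply (dpl_mult (fun _ => Df k x0) (fun t => gam t k)). apply dpl_const. apply Ha; auto. ring. }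
 assert (dR : derivable_pt_lim Rm 0 0).
 { intros eps He.
   set (A := sumR N (fun k => Rabs (a k) + 1)).
   assert (HA : 0 <= A) by (apply sumR_nonneg; intros; pose proof (Rabs_pos (a k)); lra).
   set (e' := eps / (2 * (A + 1))).
   assert (He' : e' > 0) by (unfold e'; apply Rdiv_lt_0_compat; lra).
   destruct (fdiff N (InRn N) f Df x0 Hx0) with (eps := e') as [d1 [Hd1 H1]]; auto.
   { exists 1. split; auto; lra. }
   destruct (fin_min N (fun _ h => Rabs h)
      (fun k h => h <> 0 -> Rabs (gam h k - x0 k) <= (Rabs (a k) + 1) * Rabs h)) as [d2 [Hd2 H2]].
   { intros k Hk. destruct (Ha k Hk 1 ltac:(lra)) as [dk Hdk]. exists dk. split. destruct dk; simpl; lra.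
     intros h Hh Hh0. specialize (Hdk h Hh0 Hh). rewrite Rplus_0_l, Hg0 in Hdk.
     assert (Hq : Rabs ((gam h k - x0 k) / h) <= Rabs (a k) + 1).
     { replace ((gam h k - x0 k) / h) with (((gam h k - x0 k) / h - a k) + a k) by ring.
       eapply Rle_trans; [apply Rabs_triang|]. lra. }
     unfold Rdiv in Hq. rewrite Rabs_mult, Rabs_inv in Hq.
     assert (Habs : 0 < Rabs h) by (apply Rabs_pos_lt; auto).
     apply Rmult_le_reg_r with (/ Rabs h). apply Rinv_0_lt_compat; auto.
     replace ((Rabs (a k) + 1) * Rabs h * / Rabs h) with (Rabs (a k) + 1) by (field; lra). auto. }
   set (d3 := d1 / (A + 1)).
   assert (Hd3 : d3 > 0) by (unfold d3; apply Rdiv_lt_0_compat; lra).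
   assert (Hdel : 0 < Rmin r (Rmin d2 d3)) by (repeat apply Rmin_pos; auto).
   exists (mkposreal _ Hdel). simpl. intros h Hh0 Hh.
   assert (Rmin r (Rmin d2 d3) <= r) by apply Rmin_l.
   assert (Rmin r (Rmin d2 d3) <= Rmin d2 d3) by apply Rmin_r.
   assert (Rmin d2 d3 <= d2) by apply Rmin_l. assert (Rmin d2 d3 <= d3) by apply Rmin_r.
   assert (Habs : 0 < Rabs h) by (apply Rabs_pos_lt; auto).
   assert (HS : sumR N (fun k => Rabs (gam h k - x0 k)) <= A * Rabs h).
   { unfold A. rewrite Rmult_comm, <- sumR_scal. apply sumR_le. intros k Hk.
     rewrite Rmult_comm. apply H2; auto. lra. }
   assert (Hdist : distRn N x0 (gam h) < d1).
   { eapply Rle_lt_trans. apply dist_le_sum.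
     rewrite (sumR_ext _ _ (fun k => Rabs (gam h k - x0 k))) by (intros; apply Rabs_minus_sym).
     assert (A * Rabs h <= (A + 1) * Rabs h) by nra.
     assert ((A + 1) * Rabs h < d1).
     { unfold d3 in *. apply Rmult_lt_reg_r with (/ (A + 1)). apply Rinv_0_lt_compat; lra.
       replace ((A + 1) * Rabs h * / (A + 1)) with (Rabs h) by (field; lra). unfold Rdiv in *. lra. }
     lra. }
   specialize (H1 (gam h) (Hin h ltac:(lra)) Hdist).
   assert (HRm : Rm (0 + h) - Rm 0 = f (gam h) - f x0 - sumR N (fun k => Df k x0 * (gam h k - x0 k))).
   { unfold Rm, L. rewrite Rplus_0_l, Hg0.
     rewrite (sumR_ext N (fun k => Df k x0 * (gam h k - x0 k)) (fun k => Df k x0 * gam h k - Df k x0 * x0 k)) by (intros; ring).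
     rewrite sumR_minus. ring. }
   rewrite Rminus_0_r, HRm. unfold Rdiv. rewrite Rabs_mult, Rabs_inv.
   apply Rle_lt_trans with (e' * (A * Rabs h) * / Rabs h).
   { apply Rmult_le_compat_r. left; apply Rinv_0_lt_compat; auto.
     eapply Rle_trans; [exact H1|]. apply Rmult_le_compat_l; lra. }
   replace (e' * (A * Rabs h) * / Rabs h) with (e' * A) by (field; lra).
   unfold e'. apply Rmult_lt_reg_r with (2 * (A + 1)). lra.
   replace (eps / (2 * (A + 1)) * A * (2 * (A + 1))) with (eps * A) by (field; lra). nra. }
 eapply dpl_ext with (F := fun t => L t + Rm t).
 { intros t. unfold Rm. ring. }
 eapply dpl_eqv. apply dpl_plus; eauto. ring.
Qed.

Lemma choice_nat {B : Type} (N : nat) (b0 : B) (P : nat -> B -> Prop) :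
  (forall k, (k < N)%nat -> exists y, P k y) -> exists f : nat -> B, forall k, (k < N)%nat -> P k (f k).
Proof. intros H.
 assert (H' : forall k, exists y, (k < N)%nat -> P k y).
 { intros k. destruct (lt_dec k N) as [Hk|Hk]. destruct (H k Hk) as [y Hy]. exists y; auto.
   exists b0. intros; lia. }
 exists (fun k => proj1_sig (constructive_indefinite_description _ (H' k))).
 intros k Hk. destruct (constructive_indefinite_description _ (H' k)) as [y Hy]. simpl. auto. Qed.

Lemma C2_extract N D f : Ck N D 2 f ->
  exists (Df : nat -> pt -> R) (D2f : nat -> nat -> pt -> R), cont_on N D f /\
   forall i, (i < N)%nat -> (forall x, D x -> IsPartialAt f x i (Df i x)) /\ cont_on N D (Df i) /\
    forall j, (j < N)%nat -> (forall x, D x -> IsPartialAt (Df i) x j (D2f i j x)) /\ cont_on N D (D2f i j).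
Proof. intros [Hc H]. 
 destruct (choice_nat N (fun _ : pt => 0, fun (_ : nat) (_ : pt) => 0)
   (fun i p => (forall x, D x -> IsPartialAt f x i (fst p x)) /\ cont_on N D (fst p) /\
    forall j, (j < N)%nat -> (forall x, D x -> IsPartialAt (fst p) x j (snd p j x)) /\ cont_on N D (snd p j)))
   as [F HF].
 { intros i Hi. destruct (H i Hi) as [g1 [Hg1 [Hc1 H1]]].
   destruct (choice_nat N (fun _ : pt => 0) (fun j g2 => (forall x, D x -> IsPartialAt g1 x j (g2 x)) /\ cont_on N D g2))
     as [F2 HF2].
   { intros j Hj. destruct (H1 j Hj) as [g2 [Hg2 Hc2]]. exists g2. split; auto. }
   exists (g1, F2). simpl. auto. }
 exists (fun i => fst (F i)), (fun i => snd (F i)). split; auto.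
Qed.

Lemma la_bound d (H : nat -> nat -> R) (K : nat -> nat -> R) :
  (forall w, InRn d w -> forall j, (j < d)%nat -> w j = sumR d (fun i => K j i * sumR d (fun l => H i l * w l))) ->
  exists C, C > 0 /\ forall w, InRn d w ->
    sumR d (fun j => Rabs (w j)) <= C * sumR d (fun i => Rabs (sumR d (fun l => H i l * w l))).
Proof. intros HK.
 set (B := sumR d (fun j => sumR d (fun i => Rabs (K j i)))).
 assert (HB0 : 0 <= B) by (apply sumR_nonneg; intros; apply sumR_nonneg; intros; apply Rabs_pos).
 assert (HB : forall j i, (j < d)%nat -> (i < d)%nat -> Rabs (K j i) <= B).
 { intros j i Hj Hi. apply Rle_trans with (sumR d (fun i => Rabs (K j i))).
   apply (sumR_term d (fun i => Rabs (K j i))); auto; intros; apply Rabs_pos.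
   apply (sumR_term d (fun j => sumR d (fun i => Rabs (K j i)))); auto.
   intros; apply sumR_nonneg; intros; apply Rabs_pos. }
 assert (Hd : 0 <= INR d) by apply pos_INR.
 exists (INR d * B + 1). split. nra.
 intros w Hw. set (V := sumR d (fun i => Rabs (sumR d (fun l => H i l * w l)))).
 assert (HV : 0 <= V) by (apply sumR_nonneg; intros; apply Rabs_pos).
 assert (Hj : forall j, (j < d)%nat -> Rabs (w j) <= B * V).
 { intros j Hj. rewrite (HK w Hw j Hj). eapply Rle_trans; [apply sumR_abs|].
   unfold V. rewrite <- sumR_scal. apply sumR_le. intros i Hi. rewrite Rabs_mult.
   apply Rmult_le_compat_r. apply Rabs_pos. auto. }
 eapply Rle_trans. apply sumR_bound. exact Hj. nra.
Qed.

Module LA.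
From mathcomp Require Import all_boot all_algebra.
From mathcomp Require Import Rstruct.
Import GRing.Theory.
Local Open Scope ring_scope.

Lemma sumR_big (d : nat) (f : nat -> R) : sumR d f = \sum_(i < d) f i.
Proof.
elim: d => [|d IH]; first by rewrite big_ord0.
by rewrite big_ord_recr /= IH.
Qed.

Lemma LA_inv (d : nat) (H : nat -> nat -> R) : nonsingular_mx d H ->
  exists K : nat -> nat -> R, forall w, InRn d w -> forall j, lt j d ->
    w j = sumR d (fun i => K j i * sumR d (fun l => H i l * w l)).
Proof.
case: d H => [|d] H Hns.
  by exists (fun _ _ => 0) => w _ j Hj; inversion Hj.
pose M : 'M[R]_d.+1 := \matrix_(i, j) H i j.
have kerT : forall r : 'rV[R]_d.+1, r *m M^T = 0 -> r = 0.
  move=> r Hr.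
  pose w := fun j : nat => if (j < d.+1)%N then r 0 (inord j) else 0.
  have Hw : InRn d.+1 w.
    move=> i Hi; rewrite /w.
    have : (i < d.+1)%N = false by apply/negbTE; rewrite -leqNgt; apply/leP.
    by move=> ->.
  have Hz : forall i, (i < d.+1)%coq_nat -> w i = 0.
    apply: Hns => // i Hi.
    have := congr1 (fun A : 'rV[R]_d.+1 => A 0 (inord i)) Hr.
    rewrite !mxE sumR_big => Heq; apply: (etrans _ Heq).
    apply: eq_bigr => l _.
    rewrite mxE mxE.
    have Hi' : (i < d.+1)%N by apply/ltP.
    rewrite (inordK Hi') /w ltn_ord inord_val.
    exact: mulrC.
  apply/rowP => j; rewrite mxE.
  have -> : r 0 j = w j by rewrite /w ltn_ord inord_val.
  by apply: Hz; apply/ltP.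
have unitM : M \in unitmx.
  rewrite -unitmx_tr -row_free_unit /row_free.
  have K0 : kermx M^T = 0.
    apply/row_matrixP => i; rewrite row0.
    apply: kerT.
    apply/sub_kermxP.
    exact: submx_trans (row_sub i _) (submx_refl _).
  have := mxrank_ker M^T.
  rewrite K0 mxrank0 => /eqP.
  rewrite eq_sym subn_eq0 => Hle.
  by rewrite eqn_leq rank_leq_row Hle.
exists (fun j i => (invmx M) (inord j) (inord i)) => w Hw j Hj.
have Hj' : (j < d.+1)%N by apply/ltP.
pose v : 'cV[R]_d.+1 := \col_(l < d.+1) w l.
have := mulKmx unitM v.
move/(congr1 (fun A : 'cV[R]_d.+1 => A (inord j) 0)).
rewrite [v _ _]mxE (inordK Hj') => <-.
rewrite sumR_big mxE.
apply: eq_bigr => i _.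
rewrite inord_val.
congr (_ * _).
rewrite mxE sumR_big.
apply: eq_bigr => l _.
rewrite mxE [v _ _]mxE.
done.
Qed.
End LA.

Open Scope R_scope.

Lemma isolated (n d : nat) (Y : pt -> Prop) (gm : pt -> R) (c0 : R) :
  smooth_on n (InRn n) gm ->
  (forall p, Y p -> InRn n p) ->
  Morse_on n d Y gm ->
  ((forall q, Y q -> gm q <= c0) \/ (forall q, Y q -> c0 <= gm q)) ->
  forall p, Y p -> gm p = c0 ->
  exists r, r > 0 /\ forall q, Y q -> gm q = c0 -> distRn n p q < r -> q = p.
Proof.
 intros Hsm HYin HM Hext p Yp Hp.
 destruct (C2_extract n (InRn n) gm (Hsm 2%nat)) as [Dg [D2g [Hgc Hg]]].
 destruct (HM p Yp) as [[U [phi [u0 [Hch [Uu0 Hpu0]]]]] HM2].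
 pose proof Hch as [Uopen [Hphism [HUY [Hinj [Hrel [Hinvc Himm]]]]]].
 destruct (choice_nat n (fun (_ : nat) (_ : pt) => 0, fun (_ _ : nat) (_ : pt) => 0)
   (fun k (P : (nat -> pt -> R) * (nat -> nat -> pt -> R)) =>
     cont_on d U (fun u => phi u k) /\
     forall i, (i < d)%nat -> (forall x, U x -> IsPartialAt (fun u => phi u k) x i (fst P i x)) /\ cont_on d U (fst P i) /\
      forall j, (j < d)%nat -> (forall x, U x -> IsPartialAt (fst P i) x j (snd P i j x)) /\ cont_on d U (snd P i j)))
   as [PP HPP].
 { intros k Hk. destruct (C2_extract d U _ (Hphism k Hk 2%nat)) as [Df [D2f HH]].
   exists (Df, D2f). exact HH. }
 set (Dphi := fun k i => fst (PP k) i). set (D2phi := fun k i j => snd (PP k) i j).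
 assert (HPc : forall k, (k < n)%nat -> cont_on d U (fun u => phi u k)) by (intros k Hk; apply (HPP k Hk)).
 assert (HP1 : forall k i u, (k < n)%nat -> (i < d)%nat -> U u -> IsPartialAt (fun w => phi w k) u i (Dphi k i u))
   by (intros k i u Hk Hi Uu; apply (proj2 (HPP k Hk) i Hi); auto).
 assert (HP1c : forall k i, (k < n)%nat -> (i < d)%nat -> cont_on d U (Dphi k i))
   by (intros k i Hk Hi; apply (proj2 (HPP k Hk) i Hi); auto).
 assert (HP2 : forall k i j u, (k < n)%nat -> (i < d)%nat -> (j < d)%nat -> U u -> IsPartialAt (Dphi k i) u j (D2phi k i j u))
   by (intros k i j u Hk Hi Hj Uu; apply (proj2 (proj2 (proj2 (HPP k Hk) i Hi)) j Hj); auto).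
 assert (HP2c : forall k i j, (k < n)%nat -> (i < d)%nat -> (j < d)%nat -> cont_on d U (D2phi k i j))
   by (intros k i j Hk Hi Hj; apply (proj2 (proj2 (HPP k Hk) i Hi)); auto).
 assert (Hg1 : forall k x, (k < n)%nat -> InRn n x -> IsPartialAt gm x k (Dg k x))
   by (intros k x Hk Hx; apply (Hg k Hk); auto).
 assert (Hg1c : forall k, (k < n)%nat -> cont_on n (InRn n) (Dg k)) by (intros k Hk; apply (Hg k Hk)).
 assert (Hg2 : forall k l x, (k < n)%nat -> (l < n)%nat -> InRn n x -> IsPartialAt (Dg k) x l (D2g k l x))
   by (intros k l x Hk Hl Hx; apply (proj2 (proj2 (Hg k Hk)) l Hl); auto).
 assert (Hg2c : forall k l, (k < n)%nat -> (l < n)%nat -> cont_on n (InRn n) (D2g k l))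
   by (intros k l Hk Hl; apply (proj2 (proj2 (Hg k Hk)) l Hl); auto).
 clearbody Dphi D2phi. clear HPP Hg.
 assert (HUin : forall u, U u -> InRn n (phi u)) by (intros; apply HYin, HUY; auto).
 assert (HUd : forall u, U u -> InRn d u) by (intros u Uu; apply (Uopen u Uu)).
 assert (Hline : forall u i, U u -> (i < d)%nat -> exists r, r > 0 /\ forall t, Rabs t < r -> U (shift u i t)).
 { intros u i Uu Hi. destruct (Uopen u Uu) as [Hud [r [Hr Hb]]]. exists r. split; auto.
   intros t Ht. apply Hb. apply shift_InRn; auto. rewrite dist_shift; auto. }
 assert (Hvec : forall u, U u -> forall e, e > 0 -> exists delta, delta > 0 /\ forall y, U y -> distRn d u y < delta ->
    distRn n (phi u) (phi y) < e).
 { intros u Uu. apply contat_vec. intros k Hk. apply cont_on_contat; auto. }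
 set (G := fun i u => sumR n (fun k => Dg k (phi u) * Dphi k i u)).
 assert (HG : forall u i, U u -> (i < d)%nat -> IsPartialAt (fun w => gm (phi w)) u i (G i u)).
 { intros u i Uu Hi. unfold IsPartialAt, G.
   apply (chain n gm Dg (fun t => phi (shift u i t)) (phi u) (fun k => Dphi k i u)).
   - intros y k Hy Hk. apply Hg1; auto.
   - intros k Hk. apply cont_on_contat; auto.
   - auto.
   - rewrite shift0; auto.
   - destruct (Hline u i Uu Hi) as [r [Hr Hl]]. exists r. split; auto.
   - intros k Hk. apply HP1; auto. }
 set (DG := fun i j u => sumR n (fun k => sumR n (fun l => D2g k l (phi u) * Dphi l j u) * Dphi k i u
                                          + Dg k (phi u) * D2phi k i j u)).
 assert (HDG : forall u i j, U u -> (i < d)%nat -> (j < d)%nat -> IsPartialAt (G i) u j (DG i j u)).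
 { intros u i j Uu Hi Hj. unfold IsPartialAt, G, DG. apply dpl_sumR. intros k Hk.
   eapply dpl_eqv. apply dpl_mult.
   - apply (chain n (Dg k) (D2g k) (fun t => phi (shift u j t)) (phi u) (fun l => Dphi l j u)).
     + intros y l Hy Hl. apply Hg2; auto.
     + intros l Hl. apply cont_on_contat; auto.
     + auto.
     + rewrite shift0; auto.
     + destruct (Hline u j Uu Hj) as [r [Hr Hl]]. exists r. split; auto.
     + intros l Hl. apply HP1; auto.
   - apply HP2; auto.
   - cbv beta. rewrite ?shift0. reflexivity. }
 assert (HcDG : forall i j, (i < d)%nat -> (j < d)%nat -> contat d U (DG i j) u0).
 { intros i j Hi Hj. unfold DG. apply contat_sumR. intros k Hk. apply contat_plus.
   - apply contat_mult.
     + apply contat_sumR. intros l Hl. apply contat_mult.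
       * apply (contat_comp d n U phi (D2g k l)); auto. apply cont_on_contat; auto.
       * apply cont_on_contat; auto.
     + apply cont_on_contat; auto.
   - apply contat_mult.
     + apply (contat_comp d n U phi (Dg k)); auto. apply cont_on_contat; auto.
     + apply cont_on_contat; auto. }
 assert (Hcrit : forall u, U u -> gm (phi u) = c0 -> forall i, (i < d)%nat -> G i u = 0).
 { intros u Uu Hu i Hi. destruct (Hline u i Uu Hi) as [r [Hr Hl]].
   specialize (HG u i Uu Hi). unfold IsPartialAt in HG.
   destruct Hext as [Hmax|Hmin].
   - apply (fermat_max _ _ r HG Hr). intros t Ht. rewrite shift0, Hu. apply Hmax. apply HUY; auto.
   - apply (fermat_min _ _ r HG Hr). intros t Ht. rewrite shift0, Hu. apply Hmin. apply HUY; auto. }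
 assert (Hns : nonsingular_mx d (fun i j => DG i j u0)).
 { apply (HM2 U phi u0 Hch Uu0 Hpu0).
   - intros i Hi. pose proof (HG u0 i Uu0 Hi) as H. rewrite (Hcrit u0 Uu0 ltac:(rewrite Hpu0; auto) i Hi) in H. exact H.
   - exists G. split. intros i u Hi Uu. apply HG; auto. intros i j Hi Hj. apply HDG; auto. }
 destruct (LA.LA_inv d _ Hns) as [K HK].
 destruct (la_bound d (fun i j => DG i j u0) K) as [C [HC HCb]].
 { intros w Hw j Hj. apply HK; auto. }
 destruct (Uopen u0 Uu0) as [Hu0d [r0 [Hr0 Hb0]]].
 assert (Hd0 : 0 <= INR d) by apply pos_INR.
 set (eps0 := 1 / (2 * C * (INR d + 1))).
 assert (He0 : eps0 > 0) by (unfold eps0; apply Rdiv_lt_0_compat; [lra|]; apply Rmult_lt_0_compat; lra).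
 destruct (fin_min d (fun _ y => distRn d u0 y) (fun i y => InRn d y ->
    Rabs (G i y - G i u0 - sumR d (fun j => DG i j u0 * (y j - u0 j))) <= eps0 * sumR d (fun j => Rabs (y j - u0 j))))
   as [dl [Hdl Hdlb]].
 { intros i Hi.
   assert (B1 : exists r, r > 0 /\ forall y, InRn d y -> distRn d u0 y < r -> U y) by (exists r0; split; auto).
   assert (B2 : forall y j, U y -> (j < d)%nat -> IsPartialAt (G i) y j (DG i j y)) by (intros; apply HDG; auto).
   assert (B3 : forall j, (j < d)%nat -> contat d U (DG i j) u0) by (intros; apply HcDG; auto).
   destruct (fdiff d U (G i) (fun j => DG i j) u0 Hu0d B1 B2 B3 eps0 He0) as [dd [Hdd Hddb]].
   exists dd. split; auto. }
 assert (Hloc : forall u, U u -> distRn d u0 u < dl -> (forall i, (i < d)%nat -> G i u = 0) -> u = u0).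
 { intros u Uu Hu Hz.
   set (w := fun j => u j - u0 j).
   assert (Hw : InRn d w) by (intros l Hl; unfold w; rewrite (HUd u Uu l Hl), (Hu0d l Hl); ring).
   set (S := sumR d (fun j => Rabs (w j))).
   assert (HS0 : 0 <= S) by (apply sumR_nonneg; intros; apply Rabs_pos).
   assert (Hi : forall i, (i < d)%nat -> Rabs (sumR d (fun l => DG i l u0 * w l)) <= eps0 * S).
   { intros i Hi. specialize (Hdlb i Hi u Hu (HUd u Uu)).
     rewrite (Hz i Hi), (Hcrit u0 Uu0 ltac:(rewrite Hpu0; auto) i Hi) in Hdlb.
     replace (0 - 0 - sumR d (fun j => DG i j u0 * (u j - u0 j))) with (- sumR d (fun l => DG i l u0 * w l)) in Hdlb by (unfold w; ring).
     rewrite Rabs_Ropp in Hdlb. exact Hdlb. }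
   assert (HV : sumR d (fun i => Rabs (sumR d (fun l => DG i l u0 * w l))) <= INR d * (eps0 * S))
     by (apply sumR_bound; auto).
   specialize (HCb w Hw). fold S in HCb.
   assert (Hk : C * (INR d * (eps0 * S)) <= S / 2).
   { unfold eps0. replace (C * (INR d * (1 / (2 * C * (INR d + 1)) * S))) with (INR d / (INR d + 1) * (S / 2)) by (field; lra).
     assert (INR d / (INR d + 1) <= 1).
     { apply Rmult_le_reg_r with (INR d + 1). lra. unfold Rdiv. rewrite Rmult_assoc, Rinv_l by lra. lra. }
     assert (0 <= INR d / (INR d + 1)) by (apply Rmult_le_pos; [lra| left; apply Rinv_0_lt_compat; lra]).
     nra. }
   assert (S <= C * (INR d * (eps0 * S))).
   { eapply Rle_trans; [exact HCb|]. apply Rmult_le_compat_l; lra. }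
   assert (HS : S <= 0) by lra.
   assert (Hw0 := sumR_zero d (fun j => Rabs (w j)) ltac:(intros; apply Rabs_pos) HS).
   apply functional_extensionality. intros l. destruct (lt_dec l d) as [Hl|Hl].
   - specialize (Hw0 l Hl). simpl in Hw0. unfold w in Hw0. destruct (Rcase_abs (u l - u0 l)); [rewrite Rabs_left in Hw0 by lra | rewrite Rabs_right in Hw0 by lra]; lra.
   - rewrite (HUd u Uu l) by lia. rewrite (Hu0d l) by lia. reflexivity. }
 destruct Hrel as [_ Hrel2].
 destruct (Hrel2 p (ex_intro _ u0 (conj Uu0 Hpu0))) as [r1 [Hr1 Hr1b]].
 destruct (Hinvc u0 Uu0 dl Hdl) as [d2 [Hd2 Hd2b]].
 exists (Rmin r1 d2). split. apply Rmin_pos; auto.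
 intros q Yq Hq Hpq. assert (Rmin r1 d2 <= r1) by apply Rmin_l. assert (Rmin r1 d2 <= d2) by apply Rmin_r.
 destruct (Hr1b q Yq ltac:(lra)) as [u [Uu Hu]]. subst q.
 assert (Hdu : distRn d u0 u < dl) by (apply Hd2b; auto; rewrite Hpu0; lra).
 rewrite (Hloc u Uu Hdu (Hcrit u Uu Hq)). auto.
Qed.

Lemma scf_of_isolated n (X : pt -> Prop) :
  (forall p, X p -> exists r, r > 0 /\ forall q, X q -> distRn n p q < r -> q = p) ->
  social_choice_solvable n X.
Proof. intros Hiso k Hk.
 set (allEq := fun xs : nat -> pt => forall i j, (i < k)%nat -> (j < k)%nat -> xs i = xs j).
 set (p0 := epsilon (inhabits (fun _ : nat => 0)) X).
 exists (fun xs => if excluded_middle_informative (allEq xs) then xs 0%nat else p0).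
 assert (Hp0 : forall xs, in_power X k xs -> X p0).
 { intros xs Hxs. unfold p0. apply epsilon_spec. exists (xs 0%nat). apply Hxs. lia. }
 assert (Hagree : forall xs ys, (forall i, (i < k)%nat -> xs i = ys i) ->
   (if excluded_middle_informative (allEq xs) then xs 0%nat else p0) =
   (if excluded_middle_informative (allEq ys) then ys 0%nat else p0)).
 { intros xs ys H. destruct (excluded_middle_informative (allEq xs)) as [A|A];
   destruct (excluded_middle_informative (allEq ys)) as [B|B].
   - apply H; lia.
   - exfalso. apply B. intros i j Hi Hj. rewrite <- !H by auto. apply A; auto.
   - exfalso. apply A. intros i j Hi Hj. rewrite !H by auto. apply B; auto.
   - reflexivity. }
 split; [|split; [|split; [|split]]].
 - exact Hagree.
 - intros xs Hxs. destruct (excluded_middle_informative (allEq xs)). apply Hxs; lia. eapply Hp0; eauto.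
 - intros xs Hxs eps He.
   destruct (fin_min k (fun i q => distRn n (xs i) q) (fun i q => X q -> q = xs i)) as [dl [Hdl Hb]].
   { intros i Hi. destruct (Hiso (xs i) (Hxs i Hi)) as [r [Hr Hrb]]. exists r. split; auto. }
   exists dl. split; auto. intros ys Hys Hd.
   rewrite (Hagree ys xs). rewrite dist_self. lra.
   intros i Hi. apply Hb; auto.
 - intros xs sigma Hxs [Hs1 Hs2].
   assert (Hsur : bSurjective k sigma).
   { apply (bInjective_bSurjective Hs1). exact Hs2. }
   destruct (excluded_middle_informative (allEq (fun i => xs (sigma i)))) as [A|A];
   destruct (excluded_middle_informative (allEq xs)) as [B|B].
   + apply B; [apply Hs1; lia | lia].
   + exfalso. apply B. intros i j Hi Hj.
     destruct (Hsur i Hi) as [a [Ha Hai]]. destruct (Hsur j Hj) as [b [Hb Hbj]].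
     subst. apply A; auto.
   + exfalso. apply A. intros i j Hi Hj. apply B; auto.
   + reflexivity.
 - intros p Xp. destruct (excluded_middle_informative (allEq (fun _ => p))) as [A|A]. reflexivity.
   exfalso. apply A. unfold allEq. intros; reflexivity.
Qed.

Theorem proposition11 (n m : nat) (g : nat -> pt -> R) (c : nat -> R) :
  (2 <= m)%nat -> (m < n)%nat ->
  (forall i, (i < m)%nat -> smooth_on n (InRn n) (g i)) ->
  (exists p, Yset n m g c p) ->
  bounded_set n (Yset n m g c) ->
  connected_set n (Yset n m g c) ->
  (forall p, Yset n m g c p -> grads_indep n m g p) ->
  Morse_on n (n - (m - 1)) (Yset n m g c) (g (m - 1)%nat) ->
  (is_global_max (Yset n m g c) (g (m - 1)%nat) (c (m - 1)%nat) \/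
   is_global_min (Yset n m g c) (g (m - 1)%nat) (c (m - 1)%nat)) ->
  social_choice_solvable n (Xset n m g c).
Proof.
 intros Hm Hmn Hsm _ _ _ _ HM Hext.
 apply scf_of_isolated. intros p [Yp Hp].
 assert (Hext' : (forall q, Yset n m g c q -> g (m - 1)%nat q <= c (m - 1)%nat) \/
                 (forall q, Yset n m g c q -> c (m - 1)%nat <= g (m - 1)%nat q)).
 { destruct Hext as [[_ H]|[_ H]]; auto. }
 destruct (isolated n (n - (m - 1)) (Yset n m g c) (g (m - 1)%nat) (c (m - 1)%nat)
   (Hsm (m - 1)%nat ltac:(lia)) (fun q Yq => proj1 Yq) HM Hext' p Yp Hp) as [r [Hr Hrb]].
 exists r. split; auto. intros q [Yq Hq] Hd. apply Hrb; auto.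
Qed.
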